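(* Let $P$ be any program of the imperative language described in the context (a sequential composition of commands over the variables $X_1,\dots,X_n$). Then there exist a unique $p\in\mathbb{N}$ and a unique $n\times n$ matrix $M$ with coefficients in $\{0,1,2\}^p\to\mathrm{mwp}^{\infty}$ such that $\vdash P : M$ is derivable in the deterministic flow calculus described in the context.
   Context: Language. Variables range over $X_1,\dots,X_n$ (a fixed finite set of program variables), and $b$ ranges over boolean expressions (left unspecified; they play no role in the analysis). Expressions are $e ::= X \mid X - Y \mid X + Y \mid X * Y$ (with $X,Y$ variables), and commands are $C ::= X = e \mid \texttt{if } b \texttt{ then } C \texttt{ else } C \mid \texttt{while } b \texttt{ do } \{C\} \mid \texttt{loop } X \{C\} \mid C;C$, where $\texttt{loop } X\{C\}$ means ''execute $C$ $X$ times'' and $C;C$ is sequential composition. A program is a series of commands composed sequentially. The semi-ring $\mathrm{mwp}^{\infty}$. Its carrier is $\{0,m,w,p,\infty\}$ totally ordered by $0<m<w<p<\infty$; addition is $\max$; multiplication is $\alpha\times\beta=0$ if $\alpha,\beta\neq\infty$ and one of them is $0$, and $\alpha\times\beta=\max(\alpha,\beta)$ otherwise (so $\infty\times 0=\infty$). The zero is $0$ and the unit is $m$. For a set $A$, $A\to\mathrm{mwp}^{\infty}$ denotes the semi-ring of functions $A\to\mathrm{mwp}^{\infty}$ with pointwise addition and multiplication; constants $\alpha\in\mathrm{mwp}^\infty$ are identified with constant functions. Matrices: $n\times n$ matrices over a semi-ring with componentwise sum $\oplus$, the usual matrix product $\otimes$, unit $\mathbf{1}$ (diagonal entries $m$,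 other entries $0$), and closure $M^*=\mathbf{1}\oplus M\oplus M^2\oplus\cdots$. For $\vec a\in\{0,1,2\}^p$ and a matrix $M$ with coefficients in $\{0,1,2\}^p\to\mathrm{mwp}^\infty$, $M[\vec a]$ is the matrix over $\mathrm{mwp}^\infty$ obtained by evaluating every coefficient at $\vec a$. For $i\in\{0,1,2\}$ and a choice index $k$, $\delta(i,k)$ is the function sending $\vec a$ to $m$ if $a_k=i$ and to $0$ otherwise. Vectors: $\{^{\alpha}_i\}$ is the column $n$-vector with $\alpha$ in row $i$ and $0$ elsewhere, and $\{^{\alpha}_i,^{\beta}_j\}=\{^{\alpha}_i\}\oplus\{^{\beta}_j\}$; $\mathbf{1}\xleftarrow{j}V$ is the unit matrix whose $j$-th column is replaced by $V$; $\{^{\alpha}_i\to j\}$ is the matrix with $\alpha$ at row $i$, column $j$ and $0$ elsewhere. Deterministic calculus (judgements $\vdash e:V$ and $\vdash C:M$). Each application of rule E$^{A}$ in the derivation of a program is assigned its own choice index $k\in\{1,\dots,p\}$ (distinct applications receive distinct indices, $p$ being the total number of such applications), and all coefficients are regarded as functions of $\vec a\in\{0,1,2\}^p$. (E$^{A}$) for $\star\in\{+,-\}$: $\vdash X_i\star X_j : \delta(0,k)\{^m_i,^p_j\}\oplus\delta(1,k)\{^p_i,^m_j\}\oplus\delta(2,k)\{^w_i,^w_j\}$, with $k$ the choice index of this application. (E$^{M}$) $\vdash X_i * X_j : \{^w_i,^w_j\}$. (E$^{S}$) $\vdash X_i : \{^m_i\}$. (A) from $\vdash e:V$ infer $\vdash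 X_j = e : \mathbf{1}\xleftarrow{j}V$. (C) from $\vdash C_1:M_1$ and $\vdash C_2:M_2$ infer $\vdash C_1;C_2 : M_1\otimes M_2$. (I) from $\vdash C_1:M_1$ and $\vdash C_2:M_2$ infer $\vdash \texttt{if } b \texttt{ then } C_1 \texttt{ else } C_2 : M_1\oplus M_2$. (L$^{\infty}$) from $\vdash C:M$ infer $\vdash \texttt{loop } X_l\{C\} : M^*\oplus\{^{\infty}_j\to j \mid M^*_{jj}\neq m\}\oplus\{^{p}_l\to j\mid \exists i,\ M^*_{ij}=p\}$. (W$^{\infty}$) from $\vdash C:M$ infer $\vdash \texttt{while } b \texttt{ do }\{C\} : M^*\oplus\{^{\infty}_j\to j \mid M^*_{jj}\neq m\}\oplus\{^{\infty}_i\to j\mid M^*_{ij}=p\}$. (In L$^\infty$ and W$^\infty$, the conditions on coefficients are understood pointwise, for each choice assignment.) *)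

(* Defs.v *)
From mathcomp Require Import all_boot all_algebra.
Set Implicit Arguments. Unset Strict Implicit. Unset Printing Implicit Defensive.

Inductive mwp := M0 | Mm | Mw | Mp | Minf.

Definition mwp_rank (x : mwp) : nat :=
  match x with M0 => 0 | Mm => 1 | Mw => 2 | Mp => 3 | Minf => 4 end.

Definition mwp_eqb (x y : mwp) : bool := mwp_rank x == mwp_rank y.

Definition mwp_add (x y : mwp) : mwp := if mwp_rank x <= mwp_rank y then y else x.

Definition mwp_mul (x y : mwp) : mwp :=
  if mwp_eqb x Minf || mwp_eqb y Minf then mwp_add x y
  else if mwp_eqb x M0 || mwp_eqb y M0 then M0
  else mwp_add x y.

Definition choice (p : nat) := {ffun 'I_p -> 'I_3}.
Definition coef (p : nat) := choice p -> mwp.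

Definition cst (p : nat) (x : mwp) : coef p := fun _ => x.
Definition cadd p (f g : coef p) : coef p := fun a => mwp_add (f a) (g a).
Definition cmul p (f g : coef p) : coef p := fun a => mwp_mul (f a) (g a).

(* delta(i,k): a |-> m if a_k = i, 0 otherwise (choice indices are 0-based) *)
Definition delta p (i : 'I_3) (k : nat) : coef p :=
  fun a => if [exists k' : 'I_p, (val k' == k) && (a k' == i)] then Mm else M0.

Definition ch0 : 'I_3 := @Ordinal 3 0 isT.
Definition ch1 : 'I_3 := @Ordinal 3 1 isT.
Definition ch2 : 'I_3 := @Ordinal 3 2 isT.

Definition mx (n p : nat) := 'M[coef p]_n.
Definition vec (n p : nat) := 'I_n -> coef p.

Definition mxadd n p (A B : mx n p) : mx n p := (\matrix_(i, j) cadd (A i j) (B i j))%R.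
Definition mxmul n p (A B : mx n p) : mx n p :=
  (\matrix_(i, j) \big[@cadd p / @cst p M0]_(k < n) cmul (A i k) (B k j))%R.
Definition mx1 n p : mx n p := (\matrix_(i, j) @cst p (if i == j then Mm else M0))%R.
Definition mxpow n p (A : mx n p) (k : nat) : mx n p := iter k (mxmul A) (@mx1 n p).

(* S = A^* = 1 (+) A (+) A^2 (+) ... : the sum being max in a finite chain,
   S is, pointwise, the maximum of the entries of all powers A^k *)
Definition is_star n p (A S : mx n p) : Prop :=
  forall i j a,
    (forall k, mwp_rank (mxpow A k i j a) <= mwp_rank (S i j a)) /\
    (exists k, mxpow A k i j a = S i j a).

Definition vsing (n p : nat) (i : 'I_n) (x : mwp) : vec n p :=
  fun r => @cst p (if r == i then x else M0).
Definition vadd n p (u v : vec n p) : vec n p := fun r => cadd (u r) (v r).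
Definition vscale n p (c : coef p) (v : vec n p) : vec n p := fun r => cmul c (v r).

Definition col_replace n p (j : 'I_n) (V : vec n p) : mx n p :=
  (\matrix_(r, c) if c == j then V r else @mx1 n p r c)%R.

(* conclusion of rule L^infty, from S = M^* *)
Definition loopmx n p (l : 'I_n) (S : mx n p) : mx n p :=
  (\matrix_(r, c) fun a =>
    mwp_add (S r c a)
      (mwp_add (if (r == c) && ~~ mwp_eqb (S c c a) Mm then Minf else M0)
               (if (r == l) && [exists i, mwp_eqb (S i c a) Mp] then Mp else M0)))%R.

(* conclusion of rule W^infty, from S = M^* *)
Definition whilemx n p (S : mx n p) : mx n p :=
  (\matrix_(r, c) fun a =>
    mwp_add (S r c a)
      (mwp_add (if (r == c) && ~~ mwp_eqb (S c c a) Mm then Minf else M0)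
               (if mwp_eqb (S r c a) Mp then Minf else M0)))%R.

Inductive expr (n : nat) :=
| EVar of 'I_n
| ESub of 'I_n & 'I_n
| EAdd of 'I_n & 'I_n
| EMul of 'I_n & 'I_n.

(* B : type of (unspecified) boolean expressions *)
Inductive cmd (B : Type) (n : nat) :=
| Assign of 'I_n & expr n
| If of B & cmd B n & cmd B n
| While of B & cmd B n
| Loop of 'I_n & cmd B n
| Seq of cmd B n & cmd B n.

(* ---------- The deterministic calculus ----------
   dexp p k e k' V : |- e : V, where the E^A applications inside use choice
   indices k, k+1, ..., k'-1 (in left-to-right order). *)
Definition vEA n p (k : nat) (i j : 'I_n) : vec n p :=
  vadd (vscale (@delta p ch0 k) (vadd (vsing i Mm) (vsing j Mp)))
  (vadd (vscale (@delta p ch1 k) (vadd (vsing i Mp) (vsing j Mm)))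
        (vscale (@delta p ch2 k) (vadd (vsing i Mw) (vsing j Mw)))).

Inductive dexp (n p : nat) : nat -> expr n -> nat -> vec n p -> Prop :=
| dE_sub k i j : dexp k (ESub i j) k.+1 (@vEA _ p k i j)
| dE_add k i j : dexp k (EAdd i j) k.+1 (@vEA _ p k i j)
| dE_mul k i j : dexp k (EMul i j) k (vadd (@vsing _ p i Mw) (@vsing _ p j Mw))
| dE_var k i : dexp k (EVar i) k (@vsing _ p i Mm).

Inductive dcmd (B : Type) (n p : nat) : nat -> cmd B n -> nat -> mx n p -> Prop :=
| dA k k' j e V : dexp k e k' V -> dcmd k (Assign B j e) k' (col_replace j V)
| dC k k1 k2 c1 c2 M1 M2 :
    dcmd k c1 k1 M1 -> dcmd k1 c2 k2 M2 -> dcmd k (Seq c1 c2) k2 (mxmul M1 M2)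
| dI k k1 k2 b c1 c2 M1 M2 :
    dcmd k c1 k1 M1 -> dcmd k1 c2 k2 M2 -> dcmd k (If b c1 c2) k2 (mxadd M1 M2)
| dL k k' l c M S :
    dcmd k c k' M -> is_star M S -> dcmd k (Loop l c) k' (loopmx l S)
| dW k k' b c M S :
    dcmd k c k' M -> is_star M S -> dcmd k (While b c) k' (whilemx S).

(* |- P : M with p choice indices in total, numbered 0..p-1 *)
Definition derivable (B : Type) (n p : nat) (P : cmd B n) (M : mx n p) : Prop :=
  @dcmd B n p 0 P p M.

(* Main.v *)
Require Import Defs.
From mathcomp Require Import all_boot all_algebra.
From Stdlib Require Import Classical ClassicalEpsilon FunctionalExtensionality.
Set Implicit Arguments.

Definition ecnt n (e : expr n) : nat :=
  match e with ESub _ _ | EAdd _ _ => 1 | _ => 0 end.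
Fixpoint ccnt B n (c : cmd B n) : nat :=
  match c with
  | Assign _ e => ecnt e
  | If _ c1 c2 => ccnt c1 + ccnt c2
  | While _ c => ccnt c
  | Loop _ c => ccnt c
  | Seq c1 c2 => ccnt c1 + ccnt c2
  end.

Lemma dexp_cnt n p k e k' V : @dexp n p k e k' V -> k' = k + ecnt e.
Proof. by case => *; rewrite /= ?addn1 ?addn0. Qed.

Lemma dcmd_cnt B n p k c k' M : @dcmd B n p k c k' M -> k' = k + ccnt c.
Proof.
elim => //=.
- by move=> ???? ? /dexp_cnt.
- by move=> ??????? _ -> _ ->; rewrite addnA.
- by move=> ???????? _ -> _ ->; rewrite addnA.
Qed.

Lemma dexp_uniq n p k e k1 k2 V V' :
  @dexp n p k e k1 V -> @dexp n p k e k2 V' -> V = V'.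
Proof. move=> H1 H2; destruct H1; inversion H2; subst; reflexivity. Qed.

Lemma rank_inj x y : mwp_rank x = mwp_rank y -> x = y.
Proof. by case: x; case: y. Qed.

Lemma star_uniq n p (A S S' : mx n p) : is_star A S -> is_star A S' -> S = S'.
Proof.
move=> H1 H2; apply/matrixP => i j; apply: functional_extensionality => a.
have [b1 [k1 e1]] := H1 i j a; have [b2 [k2 e2]] := H2 i j a.
apply: rank_inj; apply/eqP; rewrite eqn_leq.
by rewrite -{1}e1 b2 /= -{1}e2 b1.
Qed.

Lemma dcmd_uniq B n p c : forall k k1 k2 M M',
  @dcmd B n p k c k1 M -> @dcmd B n p k c k2 M' -> M = M'.
Proof.
elim: c => [j e|b c1 IH1 c2 IH2|b c IH|l c IH|c1 IH1 c2 IH2] k k1 k2 M M' H H';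
  inversion H; inversion H'; subst.
- match goal with H1 : dexp _ _ _ ?V, H2 : dexp _ _ _ ?V0 |- _ =>
    by rewrite (dexp_uniq H1 H2) end.
- match goal with H1 : dcmd k c1 ?a ?M1, H2 : dcmd k c1 ?b ?M2,
                  H3 : dcmd ?a c2 _ ?N1, H4 : dcmd ?b c2 _ ?N2 |- _ =>
    have e1 := dcmd_cnt H1; have e2 := dcmd_cnt H2; subst;
    by rewrite (IH1 _ _ _ _ _ H1 H2) (IH2 _ _ _ _ _ H3 H4) end.
- match goal with H1 : dcmd k c _ ?M1, H2 : dcmd k c _ ?M2,
                  H3 : is_star ?M1 ?S1, H4 : is_star ?M2 ?S2 |- _ =>
    have E := IH _ _ _ _ _ H1 H2; subst;
    by rewrite (star_uniq H3 H4) end.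
- match goal with H1 : dcmd k c _ ?M1, H2 : dcmd k c _ ?M2,
                  H3 : is_star ?M1 ?S1, H4 : is_star ?M2 ?S2 |- _ =>
    have E := IH _ _ _ _ _ H1 H2; subst;
    by rewrite (star_uniq H3 H4) end.
- match goal with H1 : dcmd k c1 ?a ?M1, H2 : dcmd k c1 ?b ?M2,
                  H3 : dcmd ?a c2 _ ?N1, H4 : dcmd ?b c2 _ ?N2 |- _ =>
    have e1 := dcmd_cnt H1; have e2 := dcmd_cnt H2; subst;
    by rewrite (IH1 _ _ _ _ _ H1 H2) (IH2 _ _ _ _ _ H3 H4) end.
Qed.

Lemma maxval (f : nat -> mwp) : exists x,
  (forall k, mwp_rank (f k) <= mwp_rank x) /\ exists k, f k = x.
Proof.
suff H : forall b, (forall k, mwp_rank (f k) <= b) -> exists x,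
  (forall k, mwp_rank (f k) <= mwp_rank x) /\ exists k, f k = x.
  by apply: (H 4) => k; case: (f k).
elim => [|b IH] Hb.
  by exists (f 0); split; [move=> k; rewrite (leq_trans (Hb k)) | exists 0].
case: (classic (exists k, mwp_rank (f k) = b.+1)) => [[k Hk]|Hn].
  by exists (f k); split; [move=> k'; rewrite Hk Hb | exists k].
apply: IH => k; have := Hb k; rewrite leq_eqVlt ltnS; case/orP => // /eqP E.
by exfalso; apply: Hn; exists k.
Qed.

Lemma star_ex n p (A : mx n p) : exists S, is_star A S.
Proof.
have H : forall ija : 'I_n * 'I_n * Defs.choice p, exists x,
  (forall k, mwp_rank (mxpow A k ija.1.1 ija.1.2 ija.2) <= mwp_rank x) /\
  exists k, mxpow A k ija.1.1 ija.1.2 ija.2 = x.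
  by move=> ija; apply: maxval.
pose g ija := proj1_sig (constructive_indefinite_description _ (H ija)).
exists (\matrix_(i, j) fun a => g (i, j, a))%R => i j a; rewrite mxE.
exact: (proj2_sig (constructive_indefinite_description _ (H (i, j, a)))).
Qed.

Lemma dexp_ex n p k e : exists V, @dexp n p k e (k + ecnt e) V.
Proof.
case: e => [i|i j|i j|i j] /=; rewrite ?addn0 ?addn1; eexists; constructor.
Qed.

Lemma dcmd_ex B n p c : forall k, exists M, @dcmd B n p k c (k + ccnt c) M.
Proof.
elim: c => [j e|b c1 IH1 c2 IH2|b c IH|l c IH|c1 IH1 c2 IH2] k /=.
- have [V HV] := dexp_ex p k e; eexists; exact: dA HV.
- have [M1 H1] := IH1 k; have [M2 H2] := IH2 (k + ccnt c1).
  rewrite addnA; eexists; exact: dI H1 H2.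
- have [M H] := IH k; have [S HS] := star_ex M; eexists; exact: dW H HS.
- have [M H] := IH k; have [S HS] := star_ex M; eexists; exact: dL H HS.
- have [M1 H1] := IH1 k; have [M2 H2] := IH2 (k + ccnt c1).
  rewrite addnA; eexists; exact: dC H1 H2.
Qed.

Theorem theorem9 (B : Type) (n : nat) (P : cmd B n) :
  exists (p : nat) (M : mx n p),
    derivable P M /\
    (forall (p' : nat) (M' : mx n p'), derivable P M' -> p' = p) /\
    (forall M' : mx n p, derivable P M' -> M' = M).
Proof.
have [M HM] := dcmd_ex (ccnt P) P 0.
exists (ccnt P), M; split; first exact: HM.
split.
- by move=> p' M' /dcmd_cnt.
- by move=> M' H; exact: dcmd_uniq H HM.
Qed.
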